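(* Let $\mathbb{k}$ be a field of characteristic $0$ containing a primitive $n$-th root of unity $\omega$, let $H=T_{n^2}(\omega)$ be the Taft Hopf algebra and $A=A_n(\omega)=\mathbb{k}[z]/(z^n-\omega)=\mathbb{k}[u]$, with $u$ the image of $z$. Equip $A$ with the left $H$-module algebra structure determined by $g\cdot u=\omega u$, $x\cdot u=1$, and the left $H$-comodule algebra structure $\rho:A\to H\otimes A$ determined by $\rho(u)=\sum_{i=0}^{n-1}a_i\,x^ig^{-(i+1)}\otimes u^{i+1}$ with $a_i=(\omega-1)^i\omega^{i(i+1)/2}$. Then, for any $n$, $A$ is commutative in the braided category ${}^H_H\mathcal{YD}$, i.e. for all $a,b\in A$, $$ab=\sum (a_{-1}\cdot b)\,a_0,$$ where $\rho(a)=\sum a_{-1}\otimes a_0$.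
   Context: The Taft Hopf algebra is $H=T_{n^2}(\omega)=\mathbb{k}\langle x,g\mid x^n=0,\ g^n=1,\ xg=\omega gx\rangle$ with $\Delta(g)=g\otimes g$, $\Delta(x)=x\otimes 1+g\otimes x$, $\epsilon(g)=1$, $\epsilon(x)=0$. ${}^H_H\mathcal{YD}$ is the category of left-left Yetter–Drinfeld modules over $H$, braided by $\tau(m\otimes n)=\sum(m_{-1}\cdot n)\otimes m_0$; an algebra $A$ in this category is commutative in it if $m_A=m_A\circ\tau$. Module algebra means $h\cdot(ab)=\sum(h_1\cdot a)(h_2\cdot b)$, $h\cdot1=\epsilon(h)1$; comodule algebra means $\rho$ is an algebra map with $(\mathrm{id}\otimes\rho)\rho=(\Delta\otimes\mathrm{id})\rho$. *)

(* Defs.v *)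
From HB Require Import structures.
From mathcomp Require Import all_boot all_order all_algebra.
Set Implicit Arguments. Unset Strict Implicit. Unset Printing Implicit Defensive.
Import Order.TTheory GRing.Theory Num.Theory.
Local Open Scope ring_scope.

Section Taft.
Variables (k : fieldType) (n : nat) (w : k).

(* ---- H = T_{n^2}(w): element h : 'M[k]_n, h i j = coefficient of g^i x^j
   in the basis {g^i x^j | 0 <= i,j < n}. *)

(* basis element g^i x^j (nat exponents): g^i = g^(i mod n) as g^n = 1,
   and x^j = 0 for j >= n as x^n = 0. *)
Definition hb (i j : nat) : 'M[k]_n :=
  \matrix_(a, b) (((a == (i %% n)%N :> nat) && (b == j :> nat))%:R).

(* multiplication, from x^b g^c = w^(bc) g^c x^b (x g = w g x), g^n = 1, x^n = 0 *)
Definition hmul (h h' : 'M[k]_n) : 'M[k]_n :=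
  \matrix_(i, j) \sum_(a < n) \sum_(b < n) \sum_(c < n) \sum_(d < n)
     (if (((a + c) %% n)%N == i :> nat) && ((b + d)%N == j :> nat)
      then h a b * h' c d * w ^+ (b * c)%N else 0).

Definition hone : 'M[k]_n := hb 0 0.
Definition hg : 'M[k]_n := hb 1 0.
Definition hginv : 'M[k]_n := hb n.-1 0.
Definition hx : 'M[k]_n := hb 0 1.
Definition hpow (h : 'M[k]_n) (m : nat) : 'M[k]_n := iter m (hmul h) hone.

(* ---- A = k[u], u^n = w: element a : 'rV[k]_n, a 0 l = coefficient of u^l. *)
Definition upow (l : nat) : 'rV[k]_n :=
  \row_m (if m == (l %% n)%N :> nat then w ^+ (l %/ n)%N else 0).
Definition Aone : 'rV[k]_n := upow 0.
Definition Amul (a b : 'rV[k]_n) : 'rV[k]_n :=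
  \sum_(p < n) \sum_(q < n) (a 0 p * b 0 q) *: upow (p + q)%N.

(* ---- module algebra structure determined by g.u = w u, x.u = 1:
   values on the basis u^l obtained from u^(l+1) = u * u^l via
   g.(ab) = (g.a)(g.b) and x.(ab) = (x.a) b + (g.a)(x.b). *)
Fixpoint g_on_upow (l : nat) : 'rV[k]_n :=
  if l is l'.+1 then Amul (w *: upow 1) (g_on_upow l') else Aone.
Fixpoint x_on_upow (l : nat) : 'rV[k]_n :=
  if l is l'.+1 then Amul Aone (upow l') + Amul (w *: upow 1) (x_on_upow l')
  else 0.
Definition g_act (b : 'rV[k]_n) : 'rV[k]_n := \sum_(l < n) b 0 l *: g_on_upow l.
Definition x_act (b : 'rV[k]_n) : 'rV[k]_n := \sum_(l < n) b 0 l *: x_on_upow l.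
Definition act (h : 'M[k]_n) (b : 'rV[k]_n) : 'rV[k]_n :=
  \sum_(i < n) \sum_(j < n) h i j *: iter i g_act (iter j x_act b).

(* ---- H (x) A: T : {ffun 'I_n -> 'M[k]_n}, T = sum_l (T l) (x) u^l. *)
Definition tens (h : 'M[k]_n) (l : nat) : {ffun 'I_n -> 'M[k]_n} :=
  [ffun m : 'I_n => (if m == (l %% n)%N :> nat then w ^+ (l %/ n)%N else 0) *: h].
Definition HAone := tens hone 0.
Definition HAmul (T T' : {ffun 'I_n -> 'M[k]_n}) : {ffun 'I_n -> 'M[k]_n} :=
  \sum_(p < n) \sum_(q < n) tens (hmul (T p) (T' q)) (p + q)%N.

Definition coef_a (i : nat) : k := (w - 1) ^+ i * w ^+ ((i * i.+1) %/ 2)%N.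
Definition rho_u : {ffun 'I_n -> 'M[k]_n} :=
  \sum_(i < n) tens (coef_a i *: hmul (hpow hx i) (hpow hginv i.+1)) i.+1.
Definition rho_upow (l : nat) : {ffun 'I_n -> 'M[k]_n} :=
  iter l (fun T => HAmul T rho_u) HAone.
Definition rho (a : 'rV[k]_n) : {ffun 'I_n -> 'M[k]_n} :=
  \sum_(l < n) a 0 l *: rho_upow l.

(* ---- braided commutativity in the YD category:  m = m o tau, i.e.
   a b = sum (a_{-1} . b) a_0 with rho(a) = sum_l (rho a l) (x) u^l. *)
Definition YD_commutative : Prop :=
  forall a b : 'rV[k]_n,
    Amul a b = \sum_(l < n) Amul (act (rho a l) b) (upow l).

End Taft.

(* Main.v *)
Require Import Defs.
From HB Require Import structures.
From mathcomp Require Import all_boot all_order all_algebra.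
From mathcomp Require Import zify ring.
Import GRing.Theory.
Local Open Scope ring_scope.
Set Implicit Arguments. Unset Strict Implicit. Unset Printing Implicit Defensive.

Section Proof.
Variables (k : fieldType) (n : nat) (w : k).
Hypothesis hn : (1 < n)%N.
Hypothesis wn : w ^+ n = 1.

Let n0 : (0 < n)%N. Proof. by apply: ltn_trans hn. Qed.

Local Notation U := (upow n w).
Local Notation rV := 'rV[k]_n.

Definition islin (V W : lmodType k) (F : V -> W) :=
  forall c x y, F (c *: x + y) = c *: F x + F y.

Section Lin.
Variables (V W : lmodType k) (F : V -> W) (lF : islin F).
Lemma lin0 : F 0 = 0.
Proof. have := lF 1 0 0; rewrite !scale1r addr0 => /(congr1 (fun z => z - F 0)).
by rewrite addrK subrr. Qed.
Lemma linD x y : F (x + y) = F x + F y.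
Proof. by have := lF 1 x y; rewrite !scale1r. Qed.
Lemma linZ c x : F (c *: x) = c *: F x.
Proof. by have := lF c x 0; rewrite !addr0 lin0 addr0. Qed.
Lemma lin_sum I r (P : pred I) (G : I -> V) :
  F (\sum_(i <- r | P i) G i) = \sum_(i <- r | P i) F (G i).
Proof. exact: (big_morph F linD lin0). Qed.
End Lin.

Lemma lin_comp (V W X : lmodType k) (F : W -> X) (G : V -> W) :
  islin F -> islin G -> islin (fun x => F (G x)).
Proof. by move=> lF lG c x y; rewrite lG lF. Qed.

Lemma lin_iter (V : lmodType k) (F : V -> V) m : islin F -> islin (iter m F).
Proof.
move=> lF; elim: m => [|m IH] c x y //=.
by rewrite IH lF.
Qed.

Lemma lin_sumf (V W : lmodType k) (I : finType) (G : I -> V -> W) :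
  (forall i, islin (G i)) -> islin (fun x => \sum_i G i x).
Proof.
move=> lG c x y; rewrite scaler_sumr -big_split /=; apply: eq_bigr => i _.
exact: lG.
Qed.

Lemma lin_scale (V W : lmodType k) (G : V -> W) a :
  islin G -> islin (fun x => a *: G x).
Proof. by move=> lG c x y; rewrite lG scalerDr !scalerA mulrC. Qed.

Lemma lin_coef (W : lmodType k) (Phi : 'I_n -> W) :
  islin (fun a : rV => \sum_(l < n) a 0 l *: Phi l).
Proof.
move=> c x y; rewrite scaler_sumr -big_split /=; apply: eq_bigr => i _.
by rewrite !mxE scalerDl scalerA.
Qed.

Lemma sum_delta (V : nmodType) (K : nat) (G : nat -> V) :
  \sum_(i < n) (if (i : nat) == K then G i else 0) = if (K < n)%N then G K else 0.
Proof.
rewrite -big_mkcond /=.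
rewrite (eq_bigl (fun i : 'I_n => (i : nat) == K)) ?big_ord1_eq //.
Qed.

Lemma sum_delta' (V : nmodType) (K : nat) (G : nat -> V) :
  \sum_(i < n) (if K == (i : nat) then G i else 0) = if (K < n)%N then G K else 0.
Proof. by rewrite -sum_delta; apply: eq_bigr => i _; rewrite eq_sym. Qed.

Lemma upowE l (m : 'I_n) : U l 0 m = if (m : nat) == (l %% n)%N then w ^+ (l %/ n) else 0.
Proof. by rewrite mxE. Qed.

Lemma coef_upow (W : lmodType k) m (Phi : nat -> W) : (m < n)%N ->
  \sum_(l < n) U m 0 l *: Phi l = Phi m.
Proof.
move=> hm.
rewrite (eq_bigr (fun l : 'I_n => if (l:nat) == m then Phi (l:nat) else 0)).
  by rewrite sum_delta hm.
move=> l _; rewrite upowE modn_small // divn_small // expr0.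
by case: eqP => _; rewrite ?scale1r ?scale0r.
Qed.

Lemma decomp (b : rV) : b = \sum_(l < n) b 0 l *: U l.
Proof.
apply/rowP => m; rewrite summxE.
rewrite (bigD1 m) //= big1 ?addr0.
  by rewrite !mxE modn_small // divn_small // eqxx expr0 mulr1.
move=> l hl; rewrite !mxE modn_small // ifN ?mulr0 //.
by apply: contra hl => /eqP h; apply/eqP/val_inj.
Qed.

Lemma ext (V : lmodType k) (F G : rV -> V) : islin F -> islin G ->
  (forall l, (l < n)%N -> F (U l) = G (U l)) -> forall b, F b = G b.
Proof.
move=> lF lG h b; rewrite (decomp b) (lin_sum lF) (lin_sum lG).
by apply: eq_bigr => l _; rewrite (linZ lF) (linZ lG) h.
Qed.

Lemma upow_shift l j : w ^+ j *: U l = U (l + j * n).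
Proof.
apply/rowP => m; rewrite !mxE addnC modnMDl divnMDl // exprD.
by case: eqP; rewrite ?mulr0.
Qed.

Lemma AmulE (a b : rV) : Amul w a b = \sum_(p < n) a 0 p *: \sum_(q < n) b 0 q *: U (p + q).
Proof.
by apply: eq_bigr => p _; rewrite scaler_sumr; apply: eq_bigr => q _; rewrite scalerA.
Qed.

Lemma AmulE2 (a b : rV) : Amul w a b = \sum_(q < n) b 0 q *: \sum_(p < n) a 0 p *: U (p + q).
Proof.
rewrite /Amul exchange_big.
by apply: eq_bigr => p _; rewrite scaler_sumr; apply: eq_bigr => q _; rewrite scalerA mulrC.
Qed.

Lemma AmulC (a b : rV) : Amul w a b = Amul w b a.
Proof. by rewrite AmulE AmulE2; do 2 (apply: eq_bigr => ? _; congr (_ *: _)); rewrite addnC. Qed.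

Lemma lin_Amull (b : rV) : islin (fun a => Amul w a b).
Proof. by move=> c x y; rewrite !AmulE; apply: lin_coef. Qed.
Lemma lin_Amulr (a : rV) : islin (Amul w a).
Proof. by move=> c x y; rewrite !AmulE2; apply: lin_coef. Qed.

Lemma upowM p q : Amul w (U p) (U q) = U (p + q).
Proof.
rewrite AmulE.
rewrite (eq_bigr (fun i : 'I_n => if (i:nat) == (p %% n)%N then
   w ^+ (p %/ n) *: \sum_(q0 < n) U q 0 q0 *: U (i + q0) else 0)); last first.
  by move=> i _; rewrite upowE; case: eqP; rewrite ?scale0r.
rewrite (sum_delta _ (fun i => w ^+ (p %/ n) *: \sum_(q0 < n) U q 0 q0 *: U (i + q0))) ltn_pmod //.
rewrite (eq_bigr (fun i : 'I_n => if (i:nat) == (q %% n)%N then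
   w ^+ (q %/ n) *: U (p %% n + i) else 0)); last first.
  by move=> i _; rewrite upowE; case: eqP; rewrite ?scale0r.
rewrite (sum_delta _ (fun i => w ^+ (q %/ n) *: U (p %% n + i))) ltn_pmod // scalerA -exprD upow_shift.
congr U; rewrite {3}(divn_eq p n) {3}(divn_eq q n); ring.
Qed.


Lemma AmulA (a b c : rV) : Amul w (Amul w a b) c = Amul w a (Amul w b c).
Proof.
move: c; apply: ext => [||r hr].
- exact: lin_Amulr.
- exact: (lin_comp (lin_Amulr a) (lin_Amulr b)).
move: b; apply: ext => [||q hq].
- exact: (lin_comp (lin_Amull (U r)) (lin_Amulr a)).
- exact: (lin_comp (lin_Amulr a) (lin_Amull (U r))).
rewrite upowM; move: a; apply: ext => [||p hp].
- exact: (lin_comp (lin_Amull (U r)) (lin_Amull (U q))).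
- exact: lin_Amull.
by rewrite !upowM addnA.
Qed.

Definition qn (l : nat) : k := \sum_(t < l) w ^+ t.
Lemma qnS l : qn l.+1 = 1 + w * qn l.
Proof.
by rewrite /qn big_ord_recl expr0 mulr_sumr; congr (_ + _); apply: eq_bigr => i _; rewrite exprS.
Qed.

Lemma g_on_upowE l : g_on_upow n w l = w ^+ l *: U l.
Proof.
elim: l => [|l IH] /=; first by rewrite scale1r.
rewrite IH (linZ (lin_Amulr _)) (linZ (lin_Amull _)) upowM scalerA -exprSr.
by rewrite add1n.
Qed.

Lemma x_on_upowE l : x_on_upow n w l = qn l *: U l.-1.
Proof.
elim: l => [|l IH] /=; first by rewrite /qn big_ord0 scale0r.
rewrite IH /Aone upowM add0n (linZ (lin_Amulr _)) (linZ (lin_Amull _)) upowM scalerA.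
case: l IH => [|l] IH /=.
  by rewrite /qn big_ord0 mul0r scale0r addr0 big_ord1 expr0 scale1r.
by rewrite add1n (qnS l.+1) scalerDl scale1r mulrC.
Qed.

Lemma lin_g : islin (g_act w : rV -> rV).
Proof. exact: lin_coef. Qed.
Lemma lin_x : islin (x_act w : rV -> rV).
Proof. exact: lin_coef. Qed.

Lemma g_U m : (m < n)%N -> g_act w (U m) = w ^+ m *: U m.
Proof.
move=> hm; rewrite /g_act (coef_upow (fun l => g_on_upow n w l)) //.
exact: g_on_upowE.
Qed.

Lemma x_U m : (m < n)%N -> x_act w (U m) = qn m *: U m.-1.
Proof.
move=> hm; rewrite /x_act (coef_upow (fun l => x_on_upow n w l)) //.
exact: x_on_upowE.
Qed.

Lemma iter_g i m : (m < n)%N -> iter i (g_act w) (U m) = (w ^+ m) ^+ i *: U m.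
Proof.
move=> hm; elim: i => [|i IH] /=; first by rewrite scale1r.
by rewrite IH (linZ lin_g) g_U // scalerA exprSr.
Qed.

Definition ff (m j : nat) : k := \prod_(t < j) qn (m - t).

Lemma iter_x j m : (m < n)%N -> iter j (x_act w) (U m) = ff m j *: U (m - j).
Proof.
move=> hm; elim: j => [|j IH] /=; first by rewrite /ff big_ord0 scale1r subn0.
rewrite IH (linZ lin_x) x_U; last by apply: leq_ltn_trans (leq_subr j m) hm.
by rewrite scalerA /ff big_ord_recr /= subnS.
Qed.

Lemma lin_act h : islin (act w h : rV -> rV).
Proof.
rewrite /act; apply: (lin_sumf (G := fun i y => \sum_(j < n) h i j *: iter i (g_act w) (iter j (x_act w) y))) => i.
apply: (lin_sumf (G := fun j y => h i j *: iter i (g_act w) (iter j (x_act w) y))) => j.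
apply: lin_scale.
exact: (lin_comp (lin_iter i lin_g) (lin_iter j lin_x)).
Qed.

Lemma lin_acth (y : rV) : islin (fun h : 'M[k]_n => act w h y).
Proof.
move=> c x z; rewrite /act scaler_sumr -big_split; apply: eq_bigr => i _ /=.
rewrite scaler_sumr -big_split; apply: eq_bigr => j _ /=.
by rewrite !mxE scalerDl scalerA.
Qed.

Lemma act_U h m : (m < n)%N -> act w h (U m) =
  \sum_(i < n) \sum_(j < n) h i j *: (((w ^+ (m - j)) ^+ i * ff m j) *: U (m - j)).
Proof.
move=> hm; apply: eq_bigr => i _; apply: eq_bigr => j _.
rewrite iter_x // (linZ (lin_iter i lin_g)) iter_g; last first.
  by apply: leq_ltn_trans (leq_subr j m) hm.
by rewrite (scalerA (ff m j)) [_ * ff _ _]mulrC.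
Qed.

Lemma act_hone (y : rV) : act w (hone k n) y = y.
Proof.
rewrite /act (bigD1 (Ordinal n0)) //= [X in _ + X]big1 ?addr0 => [|i hi]; last first.
  apply: big1 => j _; rewrite !mxE mod0n.
  have -> : ((i : nat) == 0%N) = false.
    by apply/negbTE; apply: contra hi => /eqP h; apply/eqP/val_inj.
  by rewrite scale0r.
rewrite (bigD1 (Ordinal n0)) //= [X in _ + X]big1 ?addr0 => [|j hj]; last first.
  rewrite !mxE mod0n.
  have -> : ((j : nat) == 0%N) = false.
    by apply/negbTE; apply: contra hj => /eqP h; apply/eqP/val_inj.
  by rewrite andbF scale0r.
by rewrite !mxE mod0n scale1r.
Qed.


Lemma ff_split m d b : ff m (d + b) = ff m d * ff (m - d) b.
Proof.
rewrite /ff big_split_ord /=; congr (_ * _); apply: eq_bigr => t _ /=.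
by rewrite subnDA.
Qed.

Lemma ff_zero m j : (m < j)%N -> ff m j = 0.
Proof.
move=> H; rewrite /ff (bigD1 (Ordinal H)) //= subnn /qn big_ord0 mul0r //.
Qed.

Lemma swap3 (V : nmodType) (G : 'I_n -> 'I_n -> 'I_n -> V) :
  \sum_(i < n) \sum_(j < n) \sum_(a < n) G i j a = \sum_(a < n) \sum_(i < n) \sum_(j < n) G i j a.
Proof.
under eq_bigr => i _ do rewrite exchange_big.
by rewrite exchange_big.
Qed.

Lemma collapse2 (V : lmodType k) (X : k) K1 K2 (Y : nat -> nat -> V) : (K1 < n)%N ->
  \sum_(i < n) \sum_(j < n) (if (K1 == (i:nat)) && (K2 == (j:nat)) then X else 0) *: Y i j
  = if (K2 < n)%N then X *: Y K1 K2 else 0.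
Proof.
move=> h1.
rewrite (eq_bigr (fun i : 'I_n => if K1 == (i:nat) then
   \sum_(j < n) (if K2 == (j:nat) then X *: Y i j else 0) else 0)); last first.
  move=> i _; case: (K1 == (i:nat)) => /=.
    by apply: eq_bigr => j _; case: (K2 == (j:nat)); rewrite ?scale0r.
  by apply: big1 => j _; rewrite scale0r.
rewrite (sum_delta' K1 (fun i => \sum_(j < n) (if K2 == (j:nat) then X *: Y i j else 0))) h1.
by rewrite (sum_delta' K2 (fun j => X *: Y K1 j)).
Qed.

Lemma hmulE h h' (i j : 'I_n) : hmul w h h' i j = \sum_(a < n) \sum_(b < n) \sum_(c < n) \sum_(d < n)
     (if (((a + c) %% n)%N == i :> nat) && ((b + d)%N == j :> nat)
      then h a b * h' c d * w ^+ (b * c)%N else 0).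
Proof. by rewrite mxE. Qed.

Lemma act_mul h h' (y : rV) : act w (hmul w h h') y = act w h (act w h' y).
Proof.
move: y; apply: ext => [||m hm].
- exact: lin_act.
- exact: (lin_comp (lin_act h) (lin_act h')).
rewrite (act_U h' hm) (lin_sum (lin_act h)).
symmetry.
under eq_bigr => c _ do rewrite (lin_sum (lin_act h)).
under eq_bigr => c _ do under eq_bigr => d _ do
  rewrite (linZ (lin_act h)) (linZ (lin_act h)) (act_U h (leq_ltn_trans (leq_subr d m) hm))
    scalerA scaler_sumr.
under eq_bigr => c _ do under eq_bigr => d _ do under eq_bigr => a _ do rewrite scaler_sumr.
under eq_bigr => c _ do rewrite exchange_big.
rewrite exchange_big.
under eq_bigr => a _ do under eq_bigr => c _ do rewrite exchange_big.
under eq_bigr => a _ do rewrite exchange_big.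
symmetry.
rewrite act_U //.
match goal with |- _ = ?r => set RR := r end.
under eq_bigr => i _ do under eq_bigr => j _ do
  rewrite hmulE scaler_suml.
under eq_bigr => i _ do under eq_bigr => j _ do under eq_bigr => a _ do rewrite scaler_suml.
under eq_bigr => i _ do under eq_bigr => j _ do under eq_bigr => a _ do under eq_bigr => b _ do
  rewrite scaler_suml.
under eq_bigr => i _ do under eq_bigr => j _ do under eq_bigr => a _ do under eq_bigr => b _ do
  under eq_bigr => c _ do rewrite scaler_suml.
rewrite swap3.
under eq_bigr => a _ do rewrite swap3.
under eq_bigr => a _ do under eq_bigr => b _ do rewrite swap3.
under eq_bigr => a _ do under eq_bigr => b _ do under eq_bigr => c _ do rewrite swap3.
under eq_bigr => a _ do under eq_bigr => b _ do under eq_bigr => c _ do under eq_bigr => d _ do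
  rewrite (@collapse2 _ _ _ _ (fun i j => ((w ^+ (m - j)) ^+ i * ff m j) *: U (m - j)) (ltn_pmod _ n0)).
rewrite /RR; apply: eq_bigr => a _; apply: eq_bigr => b _.
apply: eq_bigr => c _; apply: eq_bigr => d _.
have E : (m - d - b = m - (b + d))%N by lia.
rewrite E !scalerA.
case: (ltnP m (b + d)) => Hbd.
  have : ff m d * ff (m - d) b = 0 by rewrite -ff_split ff_zero // addnC.
  move/eqP; rewrite mulf_eq0 => /orP [] /eqP ->.
    by rewrite ff_zero // ?mulr0 ?mul0r !scale0r; case: ifP; rewrite ?mulr0 ?scale0r.
  by rewrite ff_zero // ?mulr0 ?mul0r !scale0r; case: ifP; rewrite ?mulr0 ?scale0r.
rewrite ifT; last by apply: leq_ltn_trans Hbd hm.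
congr (_ *: _).
rewrite (addnC b d) ff_split.
have Hmd : (m - d = (m - (d + b)) + b)%N by lia.
rewrite Hmd; set e := (m - (d + b))%N.
rewrite -!exprM (mulnC e ((a + c) %% n)%N) (exprM w ((a + c) %% n)%N e) (expr_mod _ wn) -exprM.
rewrite !mulnDl !exprD (mulnC e a) (mulnC e c).
ring.
Qed.


Lemma act_hb i j (hi : (i < n)%N) (hj : (j < n)%N) (y : rV) :
  act w (hb k n i j) y = iter i (g_act w) (iter j (x_act w) y).
Proof.
rewrite /act (bigD1 (Ordinal hi)) //= [X in _ + X]big1 ?addr0 => [|i' hi']; last first.
  apply: big1 => j' _; rewrite !mxE (modn_small hi).
  have -> : ((i' : nat) == i) = false.
    by apply/negbTE; apply: contra hi' => /eqP h; apply/eqP/val_inj.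
  by rewrite scale0r.
rewrite (bigD1 (Ordinal hj)) //= [X in _ + X]big1 ?addr0 => [|j' hj']; last first.
  rewrite !mxE (modn_small hi).
  have -> : ((j' : nat) == j) = false.
    by apply/negbTE; apply: contra hj' => /eqP h; apply/eqP/val_inj.
  by rewrite andbF scale0r.
by rewrite !mxE (modn_small hi) !eqxx scale1r.
Qed.

Lemma act_hone' (y : rV) : act w (hone k n) y = y.
Proof. exact: act_hb. Qed.

Lemma act_hpow h j (y : rV) : act w (hpow w h j) y = iter j (act w h) y.
Proof. elim: j => [|j IH] /=; first exact: act_hone. by rewrite act_mul IH. Qed.

Lemma iter_ginv j m : (m < n)%N ->
  iter j (act w (hginv k n)) (U m) = ((w ^+ m) ^+ n.-1) ^+ j *: U m.
Proof.
move=> hm; elim: j => [|j IH] /=; first by rewrite scale1r.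
have hn1 : (n.-1 < n)%N by lia.
rewrite IH (linZ (lin_act _)) /hginv (act_hb hn1 n0) /= iter_g // scalerA.
by rewrite exprSr mulrC.
Qed.

Lemma iter_hx j m : (m < n)%N -> iter j (act w (hx k n)) (U m) = ff m j *: U (m - j).
Proof.
move=> hm; rewrite -iter_x //; elim: j => [|j IH] //=.
by rewrite IH /hx (act_hb n0 hn).
Qed.

Lemma tens_sum h s (y : rV) :
  \sum_(l < n) Amul w (act w (tens w h s l) y) (U l) = Amul w (act w h y) (U s).
Proof.
match goal with |- _ = ?r => set RR := r end.
rewrite (eq_bigr (fun l : 'I_n => if (l:nat) == (s %% n)%N then
    w ^+ (s %/ n) *: Amul w (act w h y) (U l) else 0)); last first.
  move=> l _; rewrite /tens ffunE (linZ (lin_acth y)) (linZ (lin_Amull _)).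
  by case: eqP; rewrite ?scale0r.
rewrite (sum_delta _ (fun l => w ^+ (s %/ n) *: Amul w (act w h y) (U l))) ltn_pmod //.
by rewrite -(linZ (lin_Amulr _)) upow_shift addnC -divn_eq.
Qed.

Lemma HAmul_sum T T' (y : rV) :
  \sum_(l < n) Amul w (act w (HAmul w T T' l) y) (U l) =
  \sum_(p < n) \sum_(q < n) Amul w (act w (hmul w (T p) (T' q)) y) (U (p + q)).
Proof.
match goal with |- _ = ?r => set RR := r end.
rewrite /HAmul.
under eq_bigr => l _ do rewrite sum_ffunE (lin_sum (lin_acth y)) (lin_sum (lin_Amull _)).
under eq_bigr => l _ do under eq_bigr => p _ do
  rewrite sum_ffunE (lin_sum (lin_acth y)) (lin_sum (lin_Amull _)).
rewrite swap3 swap3 /RR; apply: eq_bigr => p _; apply: eq_bigr => q _.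
exact: tens_sum.
Qed.


Lemma tri N : ((N * N.+1) %/ 2 = (N * N.-1) %/ 2 + N)%N.
Proof.
case: N => [|N] //=.
have -> : (N.+1 * N.+2 = N.+1 * 2 + N.+1 * N)%N by ring.
by rewrite divnMDl // addnC.
Qed.

Definition PP m N := \prod_(t < N) (w ^+ (m - t) - 1).

Lemma Pff i m : (w - 1) ^+ i * ff m i = PP m i.
Proof.
elim: i => [|i IH]; first by rewrite /ff /PP !big_ord0 mulr1.
rewrite /ff /PP !big_ord_recr /= -/(ff m i) -/(PP m i) -IH subrX1 -/(qn (m - i)) exprSr.
ring.
Qed.

Lemma ident m : (m < n)%N ->
  \sum_(i < n) coef_a w i * ((w ^+ m) ^+ (n.-1 * i.+1) * ff m i) = 1.
Proof.
move=> hm.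
pose e N := ((N * N.-1) %/ 2 + m * (n.-1 * N))%N.
have key : forall N, \sum_(i < N) coef_a w i * ((w ^+ m) ^+ (n.-1 * i.+1) * ff m i)
    = 1 - PP m N * w ^+ e N.
  elim => [|N IH].
    have -> : e 0%N = 0%N by rewrite /e !muln0.
    by rewrite big_ord0 /PP big_ord0 mul1r expr0 subrr.
  have eS : e N.+1 = ((N * N.+1) %/ 2 + m * (n.-1 * N.+1))%N.
    by rewrite /e; congr (_ %/ 2 + _)%N; rewrite mulnC.
  have hterm : coef_a w N * ((w ^+ m) ^+ (n.-1 * N.+1) * ff m N) = PP m N * w ^+ e N.+1.
    by rewrite eS exprD -exprM /coef_a -Pff; ring.
  rewrite big_ord_recr /= IH hterm {3}/PP big_ord_recr /= -/(PP m N).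
  case: (ltnP m N) => hN.
    have -> : PP m N = 0.
      by rewrite /PP (bigD1 (Ordinal hN)) //= subnn expr0 subrr mul0r.
    by rewrite !mul0r addr0.
  have hexp : w ^+ e N = w ^+ (m - N) * w ^+ e N.+1.
    rewrite -exprD.
    have -> : (m - N + e N.+1 = e N + n * m)%N.
      rewrite eS tri /e.
      have Hn : n = n.-1.+1 by lia.
      rewrite {3}Hn. nia.
    by rewrite exprD exprM wn expr1n mulr1.
  rewrite hexp; ring.
rewrite key.
have -> : PP m n = 0.
  by rewrite /PP (bigD1 (Ordinal hm)) //= subnn expr0 subrr mul0r.
by rewrite mul0r subr0.
Qed.


Lemma Amul_suml (F : 'I_n -> rV) b : Amul w (\sum_(i < n) F i) b = \sum_(i < n) Amul w (F i) b.
Proof. exact: (lin_sum (lin_Amull b)). Qed.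
Lemma Amul_sumr (F : 'I_n -> rV) a : Amul w a (\sum_(i < n) F i) = \sum_(i < n) Amul w a (F i).
Proof. exact: (lin_sum (lin_Amulr a)). Qed.

Lemma act_hpowS h j (y : rV) : act w (hmul w h (hpow w h j)) y = iter j.+1 (act w h) y.
Proof. exact: (act_hpow h j.+1 y). Qed.

Lemma base (y : rV) : Amul w (U 1) y = \sum_(t < n) Amul w (act w (rho_u n w t) y) (U t).
Proof.
symmetry; move: y; apply: ext => [||m hm].
- apply: (lin_sumf (G := fun t y => Amul w (act w (rho_u n w t) y) (U t))) => t.
  exact: (lin_comp (lin_Amull _) (lin_act _)).
- exact: lin_Amulr.
rewrite upowM; match goal with |- _ = ?r => set RR := r end.
rewrite /rho_u.
under eq_bigr => t _ do rewrite sum_ffunE (lin_sum (lin_acth _)) (lin_sum (lin_Amull _)).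
rewrite exchange_big /=.
under eq_bigr => i _ do rewrite tens_sum (linZ (lin_acth _)) (linZ (lin_Amull _)) act_mul
  act_hpowS act_hpow iter_ginv // (linZ (lin_iter _ (lin_act _))) iter_hx // (linZ (lin_Amull _))
  (linZ (lin_Amull _)) upowM !scalerA.
rewrite (eq_bigr (fun i : 'I_n => (coef_a w i * ((w ^+ m) ^+ (n.-1 * i.+1) * ff m i)) *: U m.+1)).
  by rewrite -scaler_suml ident // scale1r /RR add1n.
move=> i _; rewrite -exprM.
case: (leqP (i : nat) m) => hi.
  have -> : (m - i + i.+1 = m.+1)%N by lia.
  by congr (_ *: _); ring.
by rewrite ff_zero // !(mulr0, mul0r, scale0r).
Qed.

Lemma main p (y : rV) : Amul w (U p) y = \sum_(l < n) Amul w (act w (rho_upow n w p l) y) (U l).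
Proof.
elim: p y => [|p IH] y.
  by rewrite /rho_upow /= /HAone tens_sum act_hone AmulC.
have -> : rho_upow n w p.+1 = HAmul w (rho_upow n w p) (rho_u n w) by [].
rewrite HAmul_sum; symmetry.
under eq_bigr => s _ do under eq_bigr => t _ do rewrite act_mul -upowM -AmulA.
rewrite exchange_big /=.
under eq_bigr => t _ do rewrite -Amul_suml -IH AmulA.
by rewrite -Amul_sumr -base -AmulA upowM addn1.
Qed.

End Proof.


Theorem corollary5p6 (k : fieldType) (n : nat) (w : k)
  (hchar : [pchar k] =i pred0) (hn : (1 < n)%N) (hw : n.-primitive_root w) :
  YD_commutative n w.
Proof.
have wn := prim_expr_order hw.
move=> a b.
rewrite {1}(decomp w a) (lin_sum (lin_Amull w b)).
symmetry; rewrite /rho.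
under eq_bigr => l _ do rewrite sum_ffunE (lin_sum (lin_acth w b)) (lin_sum (lin_Amull w _)).
rewrite exchange_big /=; apply: eq_bigr => p _.
under eq_bigr => l _ do rewrite ffunE (linZ (lin_acth w b)) (linZ (lin_Amull w _)).
by rewrite -scaler_sumr -(main hn wn) (linZ (lin_Amull w b)).
Qed.
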